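(* Let $A_1,\dots,A_N$ be symmetric $N\times N$ matrices over $\mathbb{F}_2$ with $(A_i)_{k,k}=\delta_{ik}$ for all $i,k$, let $A(z)=\sum_{i=1}^Nz(i)A_i$ for $z\in\mathbb{F}_2^N$, and let $C$ be any fixed symmetric $N\times N$ matrix over $\mathbb{F}_2$. Then for every integer $1\le k\le N$, with $z$ uniform in $\mathbb{F}_2^N$, $$\Pr_z\big\{\operatorname{rank}(A(z)+C)\le k-1\big\}\le\frac1{2^N}\sum_{i=0}^{k-1}\binom{N}{i}.$$ *)

(* Defs.v *)
From mathcomp Require Import all_boot all_order all_algebra.
Set Implicit Arguments. Unset Strict Implicit. Unset Printing Implicit Defensive.
Import GRing.Theory Num.Theory.
Local Open Scope ring_scope.

Definition Aof (N : nat) (A : 'I_N -> 'M['F_2]_N) (z : 'rV['F_2]_N) : 'M['F_2]_N :=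
  \sum_(i < N) z 0 i *: A i.

Definition prob_unif (N : nat) (P : pred 'rV['F_2]_N) : rat :=
  (#|[set z | P z]|%:R / #|{: 'rV['F_2]_N}|%:R)%R.

(* Main.v *)
Require Import Defs.
From mathcomp Require Import all_boot all_order all_algebra fingroup perm.
From mathcomp Require Import zify.
Import GRing.Theory Num.Theory.
Set Implicit Arguments. Unset Strict Implicit. Unset Printing Implicit Defensive.
Local Open Scope ring_scope.

Lemma F2_cases (x : 'F_2) : x = 0 \/ x = 1.
Proof. case: x => [[|[|m]]] //= H; [left|right]; exact/val_inj. Qed.

Lemma F2_idem (x : 'F_2) : x * x = x.
Proof. by case: (F2_cases x) => ->; rewrite ?mul0r ?mul1r. Qed.

Lemma F2_opp (x : 'F_2) : - x = x.
Proof. by case: (F2_cases x) => ->; [rewrite oppr0|apply/val_inj]. Qed.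

Definition supp N (z : 'rV['F_2]_N) : {set 'I_N} := [set i | z 0 i == 1].
Definition mon N (V : {set 'I_N}) (z : 'rV['F_2]_N) : 'F_2 :=
  if V \subset supp z then 1 else 0.
Definition Deg N (d : nat) (h : 'rV['F_2]_N -> 'F_2) :=
  exists b : {ffun {set 'I_N} -> 'F_2},
    (forall V : {set 'I_N}, (d < #|V|)%N -> b V = 0) /\ forall z, h z = \sum_(V : {set 'I_N}) b V * mon V z.

Lemma mon_mul N (V W : {set 'I_N}) (z : 'rV['F_2]_N) : mon V z * mon W z = mon (V :|: W) z.
Proof.
rewrite /mon subUset; case: (V \subset _); case: (W \subset _);
  by rewrite ?mul1r ?mul0r.
Qed.

Lemma var_mon N (i : 'I_N) (z : 'rV['F_2]_N) : z 0 i = mon [set i] z.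
Proof.
rewrite /mon sub1set inE; case: (F2_cases (z 0 i)) => ->; done.
Qed.

Lemma prod_mon N (V : {set 'I_N}) (z : 'rV['F_2]_N) : \prod_(i in V) z 0 i = mon V z.
Proof.
rewrite /mon; case: ifP => [/subsetP H|/negbT/subsetPn [i iV niS]].
  by apply: big1 => i /H; rewrite inE => /eqP.
rewrite (bigD1 i) //=; move: niS; rewrite inE.
by case: (F2_cases (z 0 i)) => -> // _; rewrite mul0r.
Qed.

Lemma Deg_ext N d (h1 h2 : 'rV['F_2]_N -> 'F_2) :
  Deg d h1 -> h1 =1 h2 -> Deg d h2.
Proof. by move=> [b [Hb E]] E'; exists b; split=> // z; rewrite -E'. Qed.

Lemma Deg_mono N d d' (h : 'rV['F_2]_N -> 'F_2) :
  (d <= d')%N -> Deg d h -> Deg d' h.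
Proof.
move=> le [b [Hb E]]; exists b; split=> // V lt; apply: Hb.
exact: leq_ltn_trans lt.
Qed.

Lemma Deg_mon N (U : {set 'I_N}) : Deg #|U| (mon U).
Proof.
exists [ffun V => (V == U)%:R]; split.
  by move=> V lt; rewrite ffunE; case: eqP lt => // ->; rewrite ltnn.
move=> z; rewrite (bigD1 U) //= ffunE eqxx mul1r big1 ?addr0 // => V /negbTE.
by rewrite ffunE => ->; rewrite mul0r.
Qed.

Lemma Deg_zero N d : Deg d (fun _ : 'rV['F_2]_N => 0).
Proof.
exists [ffun V => 0]; split=> [V _|z]; first by rewrite ffunE.
by rewrite big1 // => V _; rewrite ffunE mul0r.
Qed.

Lemma Deg_const N (a : 'F_2) : Deg 0 (fun _ : 'rV['F_2]_N => a).
Proof.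
apply: (@Deg_ext _ _ (fun z => a * mon set0 z)).
  case: (Deg_mon (@set0 'I_N)) => b [Hb E]; exists [ffun V => a * b V]; split.
    by move=> V lt; rewrite ffunE Hb ?mulr0 // cards0.
  by move=> z; rewrite E mulr_sumr; apply: eq_bigr => V _; rewrite ffunE mulrA.
by move=> z; rewrite /mon sub0set mulr1.
Qed.

Lemma Deg_scale N d (a : 'F_2) (h : 'rV['F_2]_N -> 'F_2) :
  Deg d h -> Deg d (fun z => a * h z).
Proof.
move=> [b [Hb E]]; exists [ffun V => a * b V]; split.
  by move=> V /Hb; rewrite ffunE => ->; rewrite mulr0.
by move=> z; rewrite E mulr_sumr; apply: eq_bigr => V _; rewrite ffunE mulrA.
Qed.

Lemma Deg_add N d (h1 h2 : 'rV['F_2]_N -> 'F_2) :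
  Deg d h1 -> Deg d h2 -> Deg d (fun z => h1 z + h2 z).
Proof.
move=> [b [Hb E]] [b' [Hb' E']]; exists [ffun V => b V + b' V]; split.
  by move=> V lt; rewrite ffunE Hb // Hb' // addr0.
by move=> z; rewrite E E' -big_split; apply: eq_bigr => V _; rewrite ffunE mulrDl.
Qed.

Lemma Deg_opp N d (h : 'rV['F_2]_N -> 'F_2) : Deg d h -> Deg d (fun z => - h z).
Proof. by move=> H; apply: Deg_ext H _ => z; rewrite F2_opp. Qed.

Lemma collect N (X : finType) (a : X -> 'F_2) (p : X -> {set 'I_N}) (z : 'rV['F_2]_N) :
  \sum_x a x * mon (p x) z = \sum_U (\sum_(x | p x == U) a x) * mon U z.
Proof.
rewrite (partition_big p predT) //; apply: eq_bigr => U _.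
by rewrite mulr_suml; apply: eq_bigr => x /eqP ->.
Qed.

Lemma Deg_mul N d1 d2 (h1 h2 : 'rV['F_2]_N -> 'F_2) :
  Deg d1 h1 -> Deg d2 h2 -> Deg (d1 + d2) (fun z => h1 z * h2 z).
Proof.
move=> [b [Hb E]] [b' [Hb' E']].
exists [ffun U => \sum_(x : {set 'I_N} * {set 'I_N} | x.1 :|: x.2 == U) (b x.1 * b' x.2)].
split.
  move=> U lt; rewrite ffunE big1 // => [[V W]] /= /eqP eU.
  case: (ltnP d1 #|V|) => [/Hb -> |l1]; first by rewrite mul0r.
  case: (ltnP d2 #|W|) => [/Hb' -> |l2]; first by rewrite mulr0.
  move: lt; rewrite -eU => lt.
  have := leq_card_setU V W => /leqifP; case: ifP => _ => [/eqP e|l].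
    by move: lt; rewrite e ltnNge leq_add.
  by move: lt; rewrite ltnNge (leq_trans (ltnW l)) // leq_add.
move=> z; rewrite E E' mulr_suml.
rewrite (eq_bigr (fun V => \sum_W (b V * b' W) * mon (V :|: W) z)); last first.
  move=> V _; rewrite mulr_sumr; apply: eq_bigr => W _.
  by rewrite mulrACA mon_mul.
rewrite pair_bigA /= (collect (fun x => b x.1 * b' x.2) (fun x => x.1 :|: x.2)).
by apply: eq_bigr => U _; rewrite ffunE.
Qed.

Lemma Deg_var N (i : 'I_N) : Deg 1 (fun z => z 0 i).
Proof.
have := Deg_mon [set i]; rewrite cards1 => H; apply: Deg_ext H _ => z.
by rewrite var_mon.
Qed.

Lemma Deg_sum N (X : finType) (P : pred X) d (F : X -> 'rV['F_2]_N -> 'F_2) :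
  (forall x, P x -> Deg d (F x)) -> Deg d (fun z => \sum_(x | P x) F x z).
Proof.
move=> H; have : forall s : seq X, Deg d (fun z => \sum_(x <- s | P x) F x z).
  elim=> [|x s IH].
    by apply: Deg_ext (Deg_zero _ _) _ => z; rewrite big_nil.
  case Px: (P x).
    by apply: Deg_ext (Deg_add (H x Px) IH) _ => z; rewrite big_cons Px.
  by apply: Deg_ext IH _ => z; rewrite big_cons Px.
by move=> /(_ (index_enum X)).
Qed.

Lemma Deg_prod N (X : eqType) (s : seq X) (P : pred X) (d : X -> nat)
  (F : X -> 'rV['F_2]_N -> 'F_2) :
  (forall x, P x -> Deg (d x) (F x)) ->
  Deg (\sum_(x <- s | P x) d x) (fun z => \prod_(x <- s | P x) F x z).
Proof.
move=> H; elim: s => [|x s IH].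
  by rewrite big_nil; apply: Deg_ext (Deg_const _ 1) _ => z; rewrite big_nil.
rewrite big_cons; case Px: (P x).
  by apply: Deg_ext (Deg_mul (H x Px) IH) _ => z; rewrite big_cons Px.
by apply: Deg_ext IH _ => z; rewrite big_cons Px.
Qed.

Lemma pair_cancel (X : finType) (g : X -> X) (f : X -> 'F_2) :
  involutive g -> (forall x, f (g x) = f x) -> \sum_(x | g x != x) f x = 0.
Proof.
move=> gK fg.
suff H : forall n (A : {set X}), (#|A| <= n)%N -> (forall x, x \in A -> g x \in A) ->
  (forall x, x \in A -> g x != x) -> \sum_(x in A) f x = 0.
  have -> : \sum_(x | g x != x) f x = \sum_(x in [set x | g x != x]) f x.
    by apply: eq_bigl => x; rewrite inE.
  apply: (H _ _ (leqnn _)) => x; rewrite !inE // gK eq_sym //.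
elim=> [|n IH] A.
  by rewrite leqn0 cards_eq0 => /eqP -> _ _; rewrite big_set0.
move=> cA cl ne; case: (set_0Vmem A) => [-> | [x xA]]; first by rewrite big_set0.
have gxA := cl x xA; have nx := ne x xA.
rewrite (bigD1 x) //= (bigD1 (g x)) /=; last by rewrite gxA.
rewrite fg.
set A' := [set i in A | (i != x) && (i != g x)].
have -> : \sum_(i | (i \in A) && (i != x) && (i != g x)) f i = \sum_(i in A') f i.
  by apply: eq_bigl => i; rewrite inE andbA.
rewrite addrA.
have -> : f x + f x = 0 by rewrite -{1}(F2_opp (f x)) addNr.
rewrite add0r; apply: IH.
- have : (#|A'| < #|A|)%N.
    apply: proper_card; apply/properP; split.
      by apply/subsetP => i; rewrite inE => /andP [].
    by exists x => //; rewrite inE eqxx andbF.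
  by move=> lt; rewrite -ltnS (leq_trans lt).
- move=> i; rewrite !inE => /andP [iA /andP [ix igx]].
  rewrite cl //=; apply/andP; split.
    by apply: contra igx => /eqP <-; rewrite gK.
  by apply: contra ix => /eqP e; rewrite -(gK i) e gK.
- by move=> i; rewrite inE => /andP [/ne].
Qed.

Definition Mz N (A : 'I_N -> 'M['F_2]_N) (C : 'M['F_2]_N) (z : 'rV['F_2]_N) :=
  Aof A z + C.
Definition Mp N (A : 'I_N -> 'M['F_2]_N) (C : 'M['F_2]_N) (T : {set 'I_N})
  (z : 'rV['F_2]_N) : 'M['F_2]_N :=
  \matrix_(a, b) if (a \in T) && (b \in T) then Mz A C z a b else (a == b)%:R.

Lemma Mz_entry N (A : 'I_N -> 'M['F_2]_N) (C : 'M['F_2]_N) (z : 'rV['F_2]_N) a b :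
  Mz A C z a b = \sum_i z 0 i * A i a b + C a b.
Proof. by rewrite /Mz /Aof mxE summxE; congr (_ + _); apply: eq_bigr => i _; rewrite mxE. Qed.

Lemma Deg_Mz N (A : 'I_N -> 'M['F_2]_N) (C : 'M['F_2]_N) (a b : 'I_N) : Deg 1 (fun z => Mz A C z a b).
Proof.
have H1 : Deg 1 (fun z : 'rV['F_2]_N => \sum_i z 0 i * A i a b).
  by apply: Deg_sum => i _; exact: (Deg_mul (Deg_var i) (Deg_const _ (A i a b))).
have H2 : Deg 1 (fun _ : 'rV['F_2]_N => C a b) := Deg_mono (leq0n 1) (Deg_const _ _).
by apply: Deg_ext (Deg_add H1 H2) _ => z; rewrite Mz_entry.
Qed.

Lemma Deg_Mp N (A : 'I_N -> 'M['F_2]_N) (C : 'M['F_2]_N) (T : {set 'I_N}) (a b : 'I_N) : Deg (a \in T) (fun z => Mp A C T z a b).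
Proof.
case aT: (a \in T).
  case bT: (b \in T).
    by apply: Deg_ext (Deg_Mz A C a b) _ => z; rewrite /Mp [in RHS]mxE aT bT.
  by apply: Deg_ext (Deg_mono _ (Deg_const _ ((a == b)%:R))) _ => // z; rewrite /Mp mxE aT bT.
by apply: Deg_ext (Deg_const _ ((a == b)%:R)) _ => z; rewrite /Mp mxE aT/=.
Qed.

Lemma Mz_sym N (A : 'I_N -> 'M['F_2]_N) (C : 'M['F_2]_N) (hAsym : forall i, (A i)^T = A i) (hCsym : C^T = C)
  (z : 'rV['F_2]_N) a b : Mz A C z a b = Mz A C z b a.
Proof.
rewrite !Mz_entry; congr (_ + _).
  apply: eq_bigr => i _; congr (_ * _).
  by rewrite -{1}hAsym mxE.
by rewrite -{1}hCsym mxE.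
Qed.

Lemma Mp_sym N (A : 'I_N -> 'M['F_2]_N) (C : 'M['F_2]_N) (T : {set 'I_N}) (hAsym : forall i, (A i)^T = A i) (hCsym : C^T = C)
  (z : 'rV['F_2]_N) a b : Mp A C T z a b = Mp A C T z b a.
Proof.
rewrite /Mp mxE [in RHS]mxE andbC eq_sym; case: ifP => // _; exact: Mz_sym.
Qed.

Lemma Mz_diag N (A : 'I_N -> 'M['F_2]_N) (C : 'M['F_2]_N) (hAdiag : forall i k, A i k k = (i == k)%:R)
  (z : 'rV['F_2]_N) a : Mz A C z a a = z 0 a + C a a.
Proof.
rewrite Mz_entry; congr (_ + _); rewrite (bigD1 a) //= hAdiag eqxx mulr1.
rewrite big1 ?addr0 // => i /negbTE ia; by rewrite hAdiag ia mulr0.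
Qed.

Lemma det_F2 N (M : 'M['F_2]_N) : \det M = \sum_(s : 'S_N) \prod_i M i (s i).
Proof.
rewrite /determinant; apply: eq_bigr => s _.
have -> : (-1 : 'F_2) = 1 by apply/val_inj.
by rewrite expr1n mul1r.
Qed.

Lemma det_invol N (M : 'M['F_2]_N) (sym : forall a b, M a b = M b a) :
  \det M = \sum_(s : 'S_N | (s^-1)%g == s) \prod_i M i (s i).
Proof.
rewrite det_F2 (bigID (fun s : 'S_N => (s^-1)%g == s)) /=.
rewrite [X in _ + X](pair_cancel (g := fun s : 'S_N => (s^-1)%g)) ?addr0 //.
  exact: invgK.
move=> s; rewrite (reindex_inj (@perm_inj _ s)) /=.
by apply: eq_bigr => i _; rewrite permK sym.
Qed.

Lemma Deg_prodlin N (s : seq 'I_N) (c : 'I_N -> 'F_2) :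
  Deg (size s) (fun z => \prod_(i <- s) (z 0 i + c i)).
Proof.
have H := @Deg_prod N _ s predT (fun _ => 1%N) (fun i z => z 0 i + c i).
rewrite -sum1_size; apply: H => i _.
exact: (Deg_add (Deg_var i) (Deg_mono (leq0n 1) (Deg_const _ (c i)))).
Qed.

Lemma topdeg N (s : seq 'I_N) (c : 'I_N -> 'F_2) :
  Deg (size s).-1 (fun z => \prod_(i <- s) z 0 i - \prod_(i <- s) (z 0 i + c i)).
Proof.
elim: s => [|i s IH].
  by apply: Deg_ext (Deg_zero _ 0) _ => z; rewrite !big_nil subrr.
case: s IH => [|j s] IH.
  apply: Deg_ext (Deg_const _ (- c i)) _ => z.
  by rewrite !big_cons !big_nil !mulr1 opprD addrA subrr add0r.
have H1 := Deg_mul (Deg_var i) IH.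
have H2 := Deg_opp (Deg_scale (c i) (Deg_prodlin (j :: s) c)).
have H3 := Deg_add (Deg_mono _ H1) (Deg_mono _ H2).
apply: Deg_ext (H3 (size (i :: j :: s)).-1 _ _) _ => //=.
have E : forall F : 'I_N -> 'F_2, \prod_(x <- i :: j :: s) F x = F i * \prod_(x <- j :: s) F x.
  by move=> F; rewrite big_cons.
move=> z; rewrite !E.
by rewrite mulrBr mulrDl opprD addrA.
Qed.

Lemma card_sum N (T : {set 'I_N}) : #|T| = (\sum_i (i \in T : nat))%N.
Proof.
rewrite -sum1_card big_mkcond /=; apply: eq_bigr => i _; by case: (i \in T).
Qed.

Lemma Deg_invol_term N (A : 'I_N -> 'M['F_2]_N) (C : 'M['F_2]_N) (T : {set 'I_N})
  (hAsym : forall i, (A i)^T = A i) (hCsym : C^T = C) (s : 'S_N) :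
  (s^-1)%g == s -> s != 1%g ->
  Deg (#|T|.-1) (fun z => \prod_i Mp A C T z i (s i)).
Proof.
move=> /eqP sinv s1.
have ss : forall x, s (s x) = x by move=> x; rewrite -{1}sinv permK.
case: (pickP (fun i => (i \notin T) && (s i != i))) => [i /andP [iT si] | none].
  apply: Deg_ext (Deg_zero _ _) _ => z.
  by rewrite (bigD1 i) //= /Mp mxE (negbTE iT) /= eq_sym (negbTE si) mul0r.
have [a sa] : exists a, s a != a.
  case: (pickP (fun a => s a != a)) => [a sa|all]; first by exists a.
  case/eqP: s1; apply/permP => x; rewrite perm1.
  by move: (all x) => /= /negbT /negPn /eqP.
have aT : a \in T.
  by apply/negPn/negP => aT; move: (none a); rewrite /= aT sa.
set b := s a.
have ba : b != a := sa.
have bT : b \in T.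
  apply/negPn/negP => bT; move: (none b); rewrite /= bT /b ss eq_sym sa //.
have E : forall z, \prod_i Mp A C T z i (s i) =
   Mp A C T z a b * \prod_(i | (i != a) && (i != b)) Mp A C T z i (s i).
  move=> z; rewrite (bigD1 a) //= (bigD1 b) //= /b ss.
  by rewrite [Mp _ _ _ _ (s a) a]Mp_sym // mulrA F2_idem.
have HD := Deg_mul (Deg_Mp A C T a b)
  (@Deg_prod N _ (index_enum 'I_N) (fun i => (i != a) && (i != b))
     (fun i => (i \in T : nat)) (fun i z => Mp A C T z i (s i)) (fun i _ => Deg_Mp A C T i (s i))).
apply: Deg_ext (Deg_mono _ HD) _ => [|z]; last by rewrite E.
have HT : #|T| = (1 + (1 + \sum_(i | (i != a) && (i != b)) (i \in T : nat)))%N.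
  by rewrite (card_sum T) (bigD1 a) //= (bigD1 b) //= aT bT.
by rewrite HT aT !add1n.
Qed.

Lemma det_struct N (A : 'I_N -> 'M['F_2]_N) (C : 'M['F_2]_N) (T : {set 'I_N})
  (hAsym : forall i, (A i)^T = A i) (hAdiag : forall i k, A i k k = (i == k)%:R)
  (hCsym : C^T = C) :
  Deg (#|T|.-1) (fun z => mon T z - \det (Mp A C T z)).
Proof.
have E : forall z, \det (Mp A C T z) = \prod_(i <- enum T) (z 0 i + C i i) +
   \sum_(s : 'S_N | ((s^-1)%g == s) && (s != 1%g)) \prod_i Mp A C T z i (s i).
  move=> z; rewrite det_invol; last exact: Mp_sym.
  rewrite (bigD1 1%g) /=; last by rewrite invg1.
  congr (_ + _).
  rewrite big_enum /= [in RHS]big_mkcond /=; apply: eq_bigr => i _.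
  rewrite perm1 /Mp mxE andbb eqxx; case: ifP => // _; exact: Mz_diag.
have mT : forall z, mon T z = \prod_(i <- enum T) z 0 i.
  by move=> z; rewrite big_enum prod_mon.
have H1 := topdeg (enum T) (fun i => C i i).
have H2' : forall s : 'S_N, ((s^-1)%g == s) && (s != 1%g) ->
    Deg #|T|.-1 (fun z => \prod_i Mp A C T z i (s i)).
  by move=> s /andP [h1 h2]; exact: Deg_invol_term.
have H2 := Deg_opp (@Deg_sum N _ (fun s : 'S_N => ((s^-1)%g == s) && (s != 1%g)) _
   (fun s z => \prod_i Mp A C T z i (s i)) H2').
rewrite -cardE in H1; apply: Deg_ext (Deg_add H1 H2) _ => z.
by rewrite E mT opprD addrA.
Qed.

Lemma rank_deltas N (r : seq 'I_N) (P : pred 'I_N) :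
  (\rank (\sum_(i <- r | P i) (delta_mx i i : 'M['F_2]_N))%R <= \sum_(i <- r | P i) 1)%N.
Proof.
elim: r => [|i r IH]; first by rewrite !big_nil mxrank0.
rewrite !big_cons; case: (P i) => //.
have H := mxrank_add (delta_mx i i : 'M['F_2]_N) (\sum_(j <- r | P j) delta_mx j j)%R.
rewrite mxrank_delta in H.
by rewrite (leq_trans H) // leq_add2l.
Qed.

Lemma sum_delta_entry N (T : {set 'I_N}) (a b : 'I_N) :
  \sum_(i | i \notin T) ((a == i) && (b == i))%:R = ((a == b) && (a \notin T))%:R :> 'F_2.
Proof.
case aT: (a \in T) => /=.
  rewrite andbF big1 // => i iT; case: eqP => //= ai; move: iT; rewrite -ai aT //.
rewrite (bigD1 a) /=; last by rewrite aT.
rewrite eqxx /= andbT eq_sym big1 ?addr0 // => i /andP [_ ia].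
by rewrite eq_sym (negbTE ia).
Qed.

Lemma det_zero N (A : 'I_N -> 'M['F_2]_N) (C : 'M['F_2]_N) (T : {set 'I_N})
  (z : 'rV['F_2]_N) :
  (\rank (Mz A C z) <= #|T|.-1)%N -> (1 <= #|T|)%N -> \det (Mp A C T z) = 0.
Proof.
move=> rk T1.
set D := diag_mx (\row_i (i \in T)%:R : 'rV['F_2]_N).
set E := \sum_(i | i \notin T) (delta_mx i i : 'M['F_2]_N).
have eqM : Mp A C T z = D *m Mz A C z *m D + E.
  apply/matrixP => a b; rewrite /D /E mul_mx_diag mul_diag_mx /Mp !mxE.
  rewrite [X in _ = _ + X]summxE.
  under [X in _ = _ + X]eq_bigr do rewrite mxE.
  rewrite sum_delta_entry.
  case: eqP => [<-|_]; rewrite ?andbb;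
  case: (a \in T); try case: (b \in T);
  by rewrite /= ?mulr0n ?mulr1n ?mul1r ?mulr1 ?mul0r ?mulr0 ?addr0 ?add0r.
have rE : (\rank E <= #|~: T|)%N.
  rewrite (leq_trans (rank_deltas _ _)) // -sum1_card; apply/eq_leq/eq_bigl => i.
  by rewrite inE.
have rM : (\rank (Mp A C T z) < N)%N.
  rewrite eqM; apply: leq_ltn_trans (mxrank_add (D *m Mz A C z *m D) E) _.
  have h1 : (\rank (D *m Mz A C z *m D) <= \rank (Mz A C z))%N.
    exact: leq_trans (mxrankM_maxl _ _) (mxrankM_maxr _ _).
  have := cardsC T; rewrite card_ord => cT.
  apply: leq_ltn_trans (leq_add (leq_trans h1 rk) rE) _.
  have : (#|T|.-1 + #|~: T| < #|T| + #|~: T|)%N.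
    by case: #|T| T1 => // n _; rewrite ltn_add2r.
  by rewrite cT.
apply/eqP; apply: contraTT rM => d0.
have : Mp A C T z \in unitmx by rewrite unitmxE unitfE.
by move/mxrank_unit => ->; rewrite ltnn.
Qed.

Definition Small N k := {V : {set 'I_N} | (#|V| < k)%N}.

Definition RepS N k (S : {set 'rV['F_2]_N}) (h : 'rV['F_2]_N -> 'F_2) :=
  exists c : {ffun Small N k -> 'F_2},
    forall z, z \in S -> h z = \sum_(U : Small N k) c U * mon (val U) z.

Lemma RepS_ext N k S (h h' : 'rV['F_2]_N -> 'F_2) :
  RepS k S h -> (forall z, z \in S -> h z = h' z) -> RepS k S h'.
Proof. by move=> [c Hc] E; exists c => z zS; rewrite -E // Hc. Qed.

Lemma RepS_zero N k (S : {set 'rV['F_2]_N}) : RepS k S (fun _ => 0).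
Proof.
exists [ffun _ => 0] => z _; by rewrite big1 // => U _; rewrite ffunE mul0r.
Qed.

Lemma RepS_add N k S (h1 h2 : 'rV['F_2]_N -> 'F_2) :
  RepS k S h1 -> RepS k S h2 -> RepS k S (fun z => h1 z + h2 z).
Proof.
move=> [c Hc] [c' Hc']; exists [ffun U => c U + c' U] => z zS.
by rewrite Hc // Hc' // -big_split; apply: eq_bigr => U _; rewrite ffunE mulrDl.
Qed.

Lemma RepS_scale N k S (a : 'F_2) (h : 'rV['F_2]_N -> 'F_2) :
  RepS k S h -> RepS k S (fun z => a * h z).
Proof.
move=> [c Hc]; exists [ffun U => a * c U] => z zS.
by rewrite Hc // mulr_sumr; apply: eq_bigr => U _; rewrite ffunE mulrA.
Qed.

Lemma RepS_sum N k S (X : finType) (P : pred X) (F : X -> 'rV['F_2]_N -> 'F_2) :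
  (forall x, P x -> RepS k S (F x)) -> RepS k S (fun z => \sum_(x | P x) F x z).
Proof.
move=> H; have : forall s : seq X, RepS k S (fun z => \sum_(x <- s | P x) F x z).
  elim=> [|x s IH].
    by apply: RepS_ext (RepS_zero _ _) _ => z _; rewrite big_nil.
  case Px: (P x).
    by apply: RepS_ext (RepS_add (H x Px) IH) _ => z _; rewrite big_cons Px.
  by apply: RepS_ext IH _ => z _; rewrite big_cons Px.
by move=> /(_ (index_enum X)).
Qed.

Lemma Deg_RepS N k S d (h : 'rV['F_2]_N -> 'F_2) :
  (d < k)%N -> Deg d h -> RepS k S h.
Proof.
move=> dk [b [Hb E]]; exists [ffun U : Small N k => b (val U)] => z _.
rewrite E (bigID (fun V : {set 'I_N} => (#|V| < k)%N)) /=.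
rewrite [X in _ + X]big1 ?addr0; last first.
  by move=> V; rewrite -leqNgt => kV; rewrite Hb ?mul0r // (leq_trans dk).
rewrite (big_sub (fun V : {set 'I_N} => (#|V| < k)%N) (fun V => b V * mon V z)).
by apply: eq_bigr => U _; rewrite ffunE.
Qed.

Lemma exists_subset N (U : {set 'I_N}) k : (k <= #|U|)%N ->
  exists T : {set 'I_N}, T \subset U /\ #|T| = k.
Proof.
move=> kU; exists [set x in take k (enum U)]; split.
  by apply/subsetP => x; rewrite inE => /mem_take; rewrite mem_enum.
rewrite cardsE; move/card_uniqP: (take_uniq k (enum_uniq U)) => ->.
by rewrite size_takel // -cardE.
Qed.

Lemma mon_RepS N k (S : {set 'rV['F_2]_N}) (k1 : (1 <= k)%N)
  (hT : forall T : {set 'I_N}, #|T| = k ->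
     exists g, Deg k.-1 g /\ forall z, z \in S -> mon T z = g z) :
  forall U, RepS k S (mon U).
Proof.
suff H : forall n (U : {set 'I_N}), (#|U| <= n)%N -> RepS k S (mon U) by move=> U; exact: (H _ U (leqnn _)).
elim=> [|n IH] U.
  move=> U0; apply: (@Deg_RepS _ _ _ #|U|); last exact: Deg_mon.
  by rewrite (leq_ltn_trans U0).
move=> Un; case: (ltnP #|U| k) => [Uk|kU].
  by apply: (@Deg_RepS _ _ _ #|U|) => //; exact: Deg_mon.
have [T [TU cT]] := exists_subset kU.
have [g [[b [Hb Eb]] Eg]] := hT T cT.
have cUT : #|U :\: T| = (#|U| - k)%N.
  by rewrite cardsD (setIidPr TU) cT.
apply: (@RepS_ext _ _ _ (fun z => \sum_V b V * mon ((U :\: T) :|: V) z)).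
  apply: RepS_sum => V _.
  case: (ltnP k.-1 #|V|) => [lt|le].
    by apply: RepS_ext (RepS_zero _ _) _ => z _; rewrite Hb // mul0r.
  apply: RepS_scale; apply: IH.
  have := leq_card_setU (U :\: T) V => /leqifP.
  case: ifP => _ h; lia.
move=> z zS.
symmetry; rewrite -{1}(setID U T) (setIidPr TU) -mon_mul Eg // Eb mulr_suml.
by apply: eq_bigr => V _; rewrite -mulrA mon_mul setUC.
Qed.

Lemma delta_prod N (x z : 'rV['F_2]_N) :
  (z == x)%:R = \prod_(i <- enum 'I_N) (z 0 i + (1 + x 0 i)).
Proof.
rewrite big_enum /=; case: eqP => [->|nzx].
  rewrite big1 // => i _; rewrite addrCA -{1}(F2_opp (x 0 i)) addNr addr0 //.
have [i ni] : exists i, z 0 i != x 0 i.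
  apply/existsP; apply: contraT => /existsPn H; case: nzx.
  by apply/rowP => i; apply/eqP; move: (H i) => /negPn.
rewrite (bigD1 i) //=.
have -> : z 0 i + (1 + x 0 i) = 0.
  by move: ni; case: (F2_cases (z 0 i)) => ->; case: (F2_cases (x 0 i)) => -> //;
    rewrite ?eqxx // => _; apply/val_inj.
by rewrite mul0r.
Qed.

Lemma all_RepS N k (S : {set 'rV['F_2]_N}) (hmon : forall U, RepS k S (mon U))
  (h : 'rV['F_2]_N -> 'F_2) : RepS k S h.
Proof.
have Hd : forall x : 'rV['F_2]_N, RepS k S (fun z => (z == x)%:R).
  move=> x; have [b [_ Eb]] := Deg_prodlin (enum 'I_N) (fun i => 1 + x 0 i).
  apply: (@RepS_ext _ _ _ (fun z => \sum_V b V * mon V z)).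
    by apply: RepS_sum => V _; apply: RepS_scale.
  by move=> z _; rewrite delta_prod Eb.
apply: (@RepS_ext _ _ _ (fun z => \sum_x h x * (z == x)%:R)).
  by apply: RepS_sum => x _; apply: RepS_scale.
move=> z _; rewrite (bigD1 z) //= eqxx mulr1 big1 ?addr0 // => x /negbTE.
by rewrite eq_sym => ->; rewrite mulr0.
Qed.

Lemma card_Small N k : #|{: Small N k}| = (\sum_(0 <= i < k) 'C(N, i))%N.
Proof.
rewrite card_sig -sum1_card.
have -> : (\sum_(V in [pred x : {set 'I_N} | (#|x| < k)%N]) 1 = \sum_(V : {set 'I_N} | (#|V| < k)%N) 1)%N.
  by apply: eq_bigl => V; rewrite inE.
elim: k => [|k IH].
  by rewrite big_geq // big1 // => V; rewrite ltn0.
rewrite big_nat_recr //= -IH (bigID (fun V : {set 'I_N} => (#|V| < k)%N)) /=.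
congr (_ + _)%N.
  by apply: eq_bigl => V; case: (ltnP #|V| k) => h; rewrite ?andbT ?andbF //; apply: ltnW.
rewrite sum1dep_card.
have -> : [set x : {set 'I_N} | (#|x| < k.+1)%N && ~~ (#|x| < k)%N] = [set A : {set 'I_N} | #|A| == k].
  by apply/setP => V; rewrite !inE -leqNgt ltnS eqn_leq andbC.
by rewrite card_draws card_ord.
Qed.

Lemma count_bound N k (S : {set 'rV['F_2]_N}) (hmon : forall U, RepS k S (mon U)) :
  (#|S| <= \sum_(0 <= i < k) 'C(N, i))%N.
Proof.
pose SS := {z : 'rV['F_2]_N | z \in S}.
pose ev (c : {ffun Small N k -> 'F_2}) : {ffun SS -> 'F_2} :=
  [ffun s : SS => \sum_(U : Small N k) c U * mon (val U) (val s)].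
have surj : forall t : {ffun SS -> 'F_2}, exists c, ev c == t.
  move=> t.
  have [c Hc] := all_RepS hmon (fun z => \sum_(s : SS | val s == z) t s).
  exists c; apply/eqP/ffunP => s; rewrite ffunE -Hc; last exact: (valP s).
  rewrite (bigD1 s) //= big1 ?addr0 // => s' /andP [/eqP e ne].
  by case/eqP: ne; apply: val_inj.
pose g t := xchoose (surj t).
have ginj : injective g.
  move=> t1 t2 e; move: (xchooseP (surj t1)) (xchooseP (surj t2)).
  by rewrite -/(g t1) -/(g t2) e => /eqP -> /eqP.
have := @leq_card _ _ g ginj; rewrite !card_ffun card_Fp // leq_exp2l // card_Small.
by rewrite card_sig /=; rewrite (eq_card (fun z => erefl)).
Qed.

Theorem lemma4p6 (N : nat) (A : 'I_N -> 'M['F_2]_N) (C : 'M['F_2]_N)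
  (hAsym : forall i, (A i)^T = A i)
  (hAdiag : forall i k, A i k k = (i == k)%:R)
  (hCsym : C^T = C)
  (k : nat) (hk1 : (1 <= k)%N) (hkN : (k <= N)%N) :
  prob_unif (fun z => (\rank (Aof A z + C)%R <= k.-1)%N)
  <= (1 / (2 ^ N)%:R : rat) * (\sum_(0 <= i < k) 'C(N, i))%:R.
Proof.
set S := [set z | (\rank (Aof A z + C)%R <= k.-1)%N].
have hT : forall T : {set 'I_N}, #|T| = k ->
    exists g, Deg k.-1 g /\ forall z, z \in S -> mon T z = g z.
  move=> T cT; exists (fun z => mon T z - \det (Mp A C T z)); split.
    by rewrite -cT; exact: det_struct.
  move=> z; rewrite inE => rk; rewrite det_zero ?subr0 // cT //.
have cb := count_bound (mon_RepS hk1 hT).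
rewrite /prob_unif. have cM : #|{: 'rV['F_2]_N}| = (2 ^ N)%N by rewrite card_mx card_Fp // mul1n.
rewrite cM mul1r [X in _ <= X]mulrC.
by apply: ler_wpM2r; [rewrite invr_ge0 ler0n | rewrite ler_nat].
Qed.
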